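(* Let $P=[0,1]$. No online algorithm for the all-time worst-case (ATWC) dispersion problem in $P$ achieves a competitive ratio better than $2\ln 2$ ($\approx 1.386$).
   Context: Let $P\subset\mathbb{R}^k$ be a $k$-dimensional polytope with boundary $\partial P$; all distances $dis(\cdot,\cdot)$ are Euclidean. An instance is a sequence $S=((s_1,d_1),\dots,(s_n,d_n))$ of arrival and departure times with $s_i<d_i$ and $0=s_1\le s_2\le\dots\le s_n$; point $i$ is present at time $t$ iff $s_i\le t\le d_i$; $T=\max_i d_i$. For locations $X=(X_1,\dots,X_n)\in P^n$ and $t\le T$, let $d_{min}(t;X)=\min\{dis(X_i,\partial P),\ dis(X_i,X_j)\}$, the minimum taken over present points $i\neq j$ at time $t$. Let $OPT_A(S;P)=\max_{X}\min_{t\le T} d_{min}(t;X)$. In the online ATWC problem, an algorithm is notified of each arrival/departure event as it occurs and, when point $i$ arrives, must irrevocably choose $X_i\in P$ without knowing future events or the total number $n$ of points; the events are chosen by an adaptive adversary who knows the algorithm and sees its outputs so far. An online algorithm is $\sigma$-competitive (has competitive ratio $\sigma$) if for every instance $S$, $OPT_A(S;P)\le \sigma\cdot \min_{t\le T} d_{min}(t;X)$ where $X$ is the algorithm's output. *)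

(* Defs.v *)
From HB Require Import structures.
From mathcomp Require Import all_boot all_order all_algebra.
From mathcomp Require Import all_classical all_reals all_analysis.
Set Implicit Arguments. Unset Strict Implicit. Unset Printing Implicit Defensive.
Import Order.TTheory GRing.Theory Num.Theory.
Local Open Scope classical_set_scope.
Local Open Scope ring_scope.

Definition inP {R : realType} (x : R) : Prop := 0 <= x <= 1.

Definition dis_bd {R : realType} (x : R) : R := Num.min `|x - 0| `|x - 1|.

(* An instance with n points (indexed 0..n-1), arrival times s, departure d. *)
Definition valid_instance {R : realType} (n : nat) (s d : nat -> R) : Prop :=
  (0 < n)%N /\ s 0%N = 0 /\
  (forall i j, (i <= j < n)%N -> s i <= s j) /\
  (forall i, (i < n)%N -> s i < d i).

Definition present {R : realType} (n : nat) (s d : nat -> R) (i : nat) (t : R) : Prop :=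
  (i < n)%N /\ s i <= t <= d i.

Definition Tmax {R : realType} (n : nat) (d : nat -> R) : R :=
  \big[Num.max/0]_(i < n) d i.

(* The set of all quantities occurring in d_min(t;X) for some t <= T:
   min_{t<=T} d_min(t;X) is the infimum of this set (times at which no point is
   present contribute nothing). *)
Definition dmin_terms {R : realType} (n : nat) (s d : nat -> R) (X : nat -> R) : set R :=
  [set r | exists t, t <= Tmax n d /\
     ((exists i, present n s d i t /\ r = dis_bd (X i)) \/
      (exists i j, i <> j /\ present n s d i t /\ present n s d j t /\
                   r = `|X i - X j|))].

Definition atwc_value {R : realType} (n : nat) (s d : nat -> R) (X : nat -> R) : R :=
  inf (dmin_terms n s d X).

Definition OPT_A {R : realType} (n : nat) (s d : nat -> R) : R :=
  sup [set v | exists X : nat -> R, (forall i, (i < n)%N -> inP (X i)) /\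
                                    v = atwc_value n s d X].

(* A deterministic online algorithm: when point i arrives it sees the arrival
   times s_0..s_i (the length gives i) and, for each earlier point j < i,
   Some d_j if j has already departed (d_j < s_i) and None otherwise.
   (Against a deterministic algorithm an adaptive adversary is equivalent to
   choosing the instance in advance, the algorithm's outputs being determined
   by this history.) *)
Definition online_alg (R : realType) := seq R -> seq (option R) -> R.

Definition history_arr {R : realType} (s : nat -> R) (i : nat) : seq R :=
  [seq s j | j <- iota 0 i.+1].

Definition history_dep {R : realType} (s d : nat -> R) (i : nat) : seq (option R) :=
  [seq (if d j < s i then Some (d j) else None) | j <- iota 0 i].

Definition alg_output {R : realType} (A : online_alg R) (s d : nat -> R) : nat -> R :=
  fun i => A (history_arr s i) (history_dep s d i).

Definition competitive {R : realType} (A : online_alg R) (sigma : R) : Prop :=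
  forall (n : nat) (s d : nat -> R), valid_instance n s d ->
    OPT_A n s d <= sigma * atwc_value n s d (alg_output A s d).

(* Main.v *)
Require Import Defs.
From HB Require Import structures.
From mathcomp Require Import all_boot all_order all_algebra.
From mathcomp Require Import all_classical all_reals all_analysis.
From mathcomp Require Import lra zify.
Import Order.TTheory GRing.Theory Num.Theory.
Local Open Scope ring_scope.
Lemma min_split (R : realType) (A B t : R) :
  t + Num.min 0 (A - t) + Num.min 0 (B - t) <= Num.min A B.
Proof.
have h1 : Num.min 0 (A - t) <= 0 by rewrite ge_min lexx.
have h2 : Num.min 0 (A - t) <= A - t by rewrite ge_min lexx orbT.
have h3 : Num.min 0 (B - t) <= 0 by rewrite ge_min lexx.
have h4 : Num.min 0 (B - t) <= B - t by rewrite ge_min lexx orbT.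
case: (leP A B) => hAB; lra.
Qed.

Lemma chain (R : realType) (y h : nat -> R) (t : R) (a : nat) (l : seq nat) :
  path (fun i j => y i <= y j) a l -> uniq (a :: l) ->
  (forall u v, u \in a :: l -> v \in a :: l -> u != v -> y u <= y v ->
     t + h u + h v <= y v - y u) ->
  (size l)%:R * t + 2 * (\sum_(e <- a :: l) h e) - h a - h (last a l)
    <= y (last a l) - y a.
Proof.
elim: l a => [|b l IH] a.
  move=> _ _ _; rewrite big_cons big_nil /=; lra.
rewrite big_cons big_cons; move=> /= /andP[hab hp] /andP[ha hu] H.
have IH' : (size l)%:R * t + 2 * \sum_(e <- b :: l) h e - h b - h (last b l) <=
  y (last b l) - y b.
  apply: IH => // u v hu' hv'; apply: H; by rewrite inE ?hu' ?hv' ?orbT.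
have hne : a != b by apply: contraNneq ha => ->; rewrite inE eqxx.
have Hab : t + h a + h b <= y b - y a by apply: H => //; rewrite !inE eqxx ?orbT.
move: IH'; rewrite big_cons => IH'.
rewrite mulrS; lra.
Qed.

Lemma gaps_bound (R : realType) (m : nat) (y kap : nat -> R) (S t : R) :
  (0 < m)%N ->
  (forall e, (e < m)%N -> kap e <= y e) ->
  (forall e, (e < m)%N -> kap e <= S - y e) ->
  (forall u v, (u < m)%N -> (v < m)%N -> u != v ->
     Num.min (kap u) (kap v) <= `|y u - y v|) ->
  m.+1%:R * t + 2 * (\sum_(0 <= e < m) Num.min 0 (kap e - t)) <= S.
Proof.
move=> m0 Hl Hr Hp.
pose h := fun e => Num.min 0 (kap e - t).
pose L := sort (fun i j => y i <= y j) (iota 0 m).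
have pL : perm_eq L (iota 0 m) by rewrite /L perm_sort.
have memL : forall u, (u \in L) = (u < m)%N.
  by move=> u; rewrite /L mem_sort mem_iota.
have uL : uniq L by rewrite /L sort_uniq iota_uniq.
have sL : sorted (fun i j => y i <= y j) L.
  by apply: sort_sorted => i j; exact: le_total.
have szL : size L = m by rewrite /L size_sort size_iota.
have hsum : \sum_(0 <= e < m) Num.min 0 (kap e - t) = \sum_(e <- L) h e.
  by rewrite (perm_big _ pL) /index_iota subn0.
rewrite hsum; clear hsum.
move: pL memL uL sL szL; case: L => [|a l]; first by move=> _ _ _ _ e; rewrite -e in m0.
move=> _ memL uL sL szL.
have hal : (a < m)%N by rewrite -memL inE eqxx.
have hll : (last a l < m)%N by rewrite -memL mem_last.
have C := @chain R y h t a l sL uL.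
have C' : (size l)%:R * t + 2 * (\sum_(e <- a :: l) h e) - h a - h (last a l)
    <= y (last a l) - y a.
  apply: C => u v hu hv huv hle.
  have hu' : (u < m)%N by rewrite -memL.
  have hv' : (v < m)%N by rewrite -memL.
  have := Hp u v hu' hv' huv.
  rewrite distrC ger0_norm ?subr_ge0 // => H.
  apply: le_trans H; exact: min_split.
have B1 := Hl a hal.
have B2 := Hr _ hll.
have h1 : h a <= kap a - t by rewrite /h ge_min lexx orbT.
have h2 : h (last a l) <= kap (last a l) - t by rewrite /h ge_min lexx orbT.
have -> : m.+1%:R = (size l)%:R + 2 :> R.
  by rewrite -szL /= -addn2 natrD.
lra.
Qed.
Lemma ln_sub_le (R : realType) (a b : R) : 0 < a -> 0 < b ->
  ln a - ln b <= (a - b) / b.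
Proof.
move=> ha hb.
rewrite -ln_div ?posrE //.
have -> : a / b = 1 + (a - b) / b.
  by rewrite mulrBl divff ?gt_eqF // addrC subrK.
apply: le_ln1Dx.
rewrite mulrBl divff ?gt_eqF //.
have : 0 < a / b by apply: divr_gt0.
lra.
Qed.

Lemma natr_pos2 (R : realType) (n : nat) : 0 < n%:R + 2 :> R.
Proof. have := ler0n R n; lra. Qed.

Lemma kap_anti (R : realType) (a b : nat) : (a <= b)%N ->
  (b%:R + 2)^-1 <= (a%:R + 2)^-1 :> R.
Proof.
move=> hab; rewrite lef_pV2 ?posrE ?(natr_pos2 R) //.
by rewrite lerD2r ler_nat.
Qed.

Lemma final_bound (R : realType) (k : nat) :
  2 * ln 2 - 2 / (2 * k%:R + 3) <=
  ((2 * k).+2)%:R * (k%:R + 2)^-1 +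
  2 * (\sum_(0 <= e < (2 * k).+1) Num.min 0 ((e%:R + 2)^-1 - (k%:R + 2)^-1)) :> R.
Proof.
set t := (k%:R + 2)^-1.
have hk : (k <= (2 * k).+1)%N by lia.
rewrite (big_cat_nat (leq0n k) hk) /=.
have s1 : 0 <= \sum_(0 <= e < k) Num.min 0 ((e%:R + 2)^-1 - t) :> R.
  rewrite big_nat_cond; apply: sumr_ge0 => e /andP[/andP[_ hek] _].
  rewrite le_min lexx /= subr_ge0; apply: kap_anti; exact: ltnW.
have s2 : \sum_(k <= e < (2 * k).+1) ((e%:R + 2)^-1 - t) <=
          \sum_(k <= e < (2 * k).+1) Num.min 0 ((e%:R + 2)^-1 - t) :> R.
  apply: ler_sum_nat => e /andP[hke _].
  rewrite le_min lexx andbT subr_le0; exact: kap_anti.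
rewrite sumrB sumr_const_nat in s2.
have s3 : ln (((2 * k).+1)%:R + 2) - ln (k%:R + 2) <=
          \sum_(k <= e < (2 * k).+1) (e%:R + 2)^-1 :> R.
  rewrite -(telescope_sumr (fun e => ln (e%:R + 2)) hk).
  apply: ler_sum_nat => e _ /=.
  have := @ln_sub_le R _ _ (natr_pos2 R e.+1) (natr_pos2 R e).
  rewrite mulrSr.
  have -> : e%:R + 1 + 2 - (e%:R + 2) = 1 :> R by lra.
  by rewrite div1r.
have s4 : ln 2 - (ln (((2 * k).+1)%:R + 2) - ln (k%:R + 2)) <=
          1 / (2 * k%:R + 3) :> R.
  have h2k : ((2 * k).+1)%:R + 2 = 2 * k%:R + 3 :> R.
    by rewrite mulrSr natrM; lra.
  have hpos : 0 < 2 * k%:R + 3 :> R by have := ler0n R k; lra.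
  rewrite h2k.
  have -> : ln 2 - (ln (2 * k%:R + 3) - ln (k%:R + 2)) =
            ln (2 * (k%:R + 2)) - ln (2 * k%:R + 3) :> R.
    rewrite lnM ?posrE ?natr_pos2 //; lra.
  have h2 : 0 < 2 * (k%:R + 2) :> R by have := natr_pos2 R k; lra.
  have := @ln_sub_le R _ _ h2 hpos.
  have -> : 2 * (k%:R + 2) - (2 * k%:R + 3) = 1 :> R by lra.
  done.
have e1 : ((2 * k).+2)%:R = 2 * (k%:R + 1) :> R.
  by rewrite -addn2 natrD natrM; lra.
have e2 : ((2 * k).+1 - k)%N = k.+1 by lia.
rewrite e2 mulrSr -[t *+ k]mulr_natr in s2.
rewrite e1.
have e4 : 2 / (2 * k%:R + 3) = 2 * (1 / (2 * k%:R + 3)) :> R by rewrite mulrA mulr1.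
rewrite e4.
lra.
Qed.

Section Sem.
Variable R : realType.
Local Set Implicit Arguments.
Let s0 : nat -> R := fun _ => 0.
Let d0 : nat -> R := fun _ => 1.

Lemma Tmax_ge0 n : 0 <= Tmax n d0.
Proof.
rewrite /Tmax; apply: (big_ind (fun x : R => 0 <= x)) => //.
- by move=> a b ha hb; rewrite le_max ha.
Qed.

Lemma present0 n i : (i < n)%N -> present n s0 d0 i 0.
Proof. by move=> hi; split => //; rewrite /s0 /d0 lexx ler01. Qed.

Lemma term_bd n X i : (i < n)%N -> dmin_terms n s0 d0 X (dis_bd (X i)).
Proof.
move=> hi; exists 0; split; first exact: Tmax_ge0.
by left; exists i; split => //; exact: present0.
Qed.

Lemma term_pair n X i j : (i < n)%N -> (j < n)%N -> i <> j ->
  dmin_terms n s0 d0 X `|X i - X j|.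
Proof.
move=> hi hj hij; exists 0; split; first exact: Tmax_ge0.
right; exists i, j; split; [done | split; [exact: present0 | split; [exact: present0 | done]]].
Qed.

Lemma dis_bd_ge0 (z : R) : 0 <= dis_bd z.
Proof. by rewrite /dis_bd le_min !normr_ge0. Qed.

Lemma terms_lb n X : lbound (dmin_terms n s0 d0 X) 0.
Proof.
move=> r [t [_ [[i [_ ->]]|[i [j [_ [_ [_ ->]]]]]]]].
  exact: dis_bd_ge0.
exact: normr_ge0.
Qed.

Lemma atwc_le n X r : dmin_terms n s0 d0 X r -> atwc_value n s0 d0 X <= r.
Proof.
move=> hr; apply: ge_inf => //; exists 0; exact: terms_lb.
Qed.

Lemma atwc_ge0 n X : (0 < n)%N -> 0 <= atwc_value n s0 d0 X.
Proof.
move=> n0; apply: lb_le_inf; last exact: terms_lb.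
by exists (dis_bd (X 0%N)); exact: term_bd.
Qed.

Lemma OPT_ge n : (0 < n)%N -> (n%:R + 1)^-1 <= OPT_A n s0 d0.
Proof.
move=> n0.
set q := (n%:R + 1)^-1.
have hn : 0 <= n%:R :> R := ler0n R n.
have qpos : 0 < q by rewrite invr_gt0; lra.
have qn : (n%:R + 1) * q = 1 by rewrite mulfV //; apply/eqP => h; lra.
pose Xs := fun i : nat => (i%:R + 1) * q.
have hXs : forall i, (i < n)%N -> inP (Xs i).
  move=> i hi; have hi' : i.+1%:R <= n%:R :> R by rewrite ler_nat.
  rewrite mulrSr in hi'; have := ler0n R i => hi0.
  rewrite /inP /Xs; apply/andP; split; nra.
have hub : forall v, (exists X : nat -> R,
      (forall i, (i < n)%N -> inP (X i)) /\ v = atwc_value n s0 d0 X) -> v <= 1.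
  move=> v [X [HX ->]].
  have H1 := atwc_le (term_bd n X 0%N n0).
  have H2 : dis_bd (X 0%N) <= 1.
    rewrite /dis_bd ge_min subr0.
    have /andP[h1 h2] := HX 0%N n0.
    by rewrite ger0_norm ?h2.
  lra.
apply: le_trans (_ : atwc_value n s0 d0 Xs <= _).
  apply: lb_le_inf; first by exists (dis_bd (Xs 0%N)); exact: term_bd.
  move=> r [t [_ [[i [[hi _] ->]]|[i [j [hij [[hi _] [[hj _] ->]]]]]]]].
    have hi' : i.+1%:R <= n%:R :> R by rewrite ler_nat.
    rewrite mulrSr in hi'; have := ler0n R i => hi0.
    rewrite /dis_bd le_min subr0 /Xs; apply/andP; split.
      rewrite ger0_norm; nra.
    rewrite ler_normr; apply/orP; right; nra.
  have [hl|hl] : (i < j)%N \/ (j < i)%N by lia.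
    have h' : i.+1%:R <= j%:R :> R by rewrite ler_nat.
    rewrite mulrSr in h'; rewrite /Xs ler_normr; apply/orP; right; nra.
  have h' : j.+1%:R <= i%:R :> R by rewrite ler_nat.
  rewrite mulrSr in h'; rewrite /Xs ler_normr; apply/orP; left; nra.
apply: sup_upper_bound; last by exists Xs.
split; first by exists (atwc_value n s0 d0 Xs), Xs.
by exists 1 => v hv; exact: hub.
Qed.

End Sem.

Theorem theorem1 (R : realType) (A : online_alg R)
  (HA : forall (a : seq R) (b : seq (option R)), inP (A a b))
  (sigma : R) (Hsigma : sigma < 2 * ln 2) :
  ~ competitive A sigma.
Proof.
move=> Hc.
pose s0 : nat -> R := fun _ => 0.
pose d0 : nat -> R := fun _ => 1.
pose x := alg_output A s0 d0.
have vi : forall n, (0 < n)%N -> valid_instance n s0 d0.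
  move=> n n0; split; [done | split; [done | split]].
    by move=> i j _; rewrite /s0 lexx.
  by move=> i _; rewrite /s0 /d0 ltr01.
have base : forall n, (0 < n)%N ->
    (n%:R + 1)^-1 <= sigma * atwc_value n s0 d0 x.
  move=> n n0; have H1 := OPT_ge R n n0; have H2 := Hc n s0 d0 (vi n n0).
  lra.
have sig0 : 0 < sigma.
  have H := base 1%N isT; have H0 := atwc_ge0 R 1%N x isT.
  have hq : 0 < (1%:R + 1)^-1 :> R by rewrite invr_gt0; lra.
  case: (ltP 0 sigma) => // hs; nra.
have bd : forall n i, (i < n)%N -> (n%:R + 1)^-1 <= sigma * dis_bd (x i).
  move=> n i hi.
  have n0 : (0 < n)%N by lia.
  have H := base n n0; have H1 := atwc_le (term_bd R n x i hi); nra.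
have pr : forall n i j, (i < n)%N -> (j < n)%N -> i <> j ->
    (n%:R + 1)^-1 <= sigma * `|x i - x j|.
  move=> n i j hi hj hij.
  have n0 : (0 < n)%N by lia.
  have H := base n n0; have H1 := atwc_le (term_pair R n x hi hj hij); nra.
pose delta := 2 * ln 2 - sigma.
have dpos : 0 < delta by rewrite /delta; lra.
pose k := Num.Def.archi_bound (2 / delta).
have hk : 2 / delta < k%:R.
  by apply: archi_boundP; rewrite divr_ge0 // ltW.
have hk2 : 2 < k%:R * delta by rewrite -ltr_pdivrMr.
have hk0 : 0 <= k%:R :> R := ler0n R k.
have Fb := final_bound R k.
have Gb : ((2 * k).+2)%:R * (k%:R + 2)^-1 +
  2 * (\sum_(0 <= e < (2 * k).+1) Num.min 0 ((e%:R + 2)^-1 - (k%:R + 2)^-1))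
    <= sigma.
  apply: (@gaps_bound R (2 * k).+1 (fun e => sigma * x e) (fun e => (e%:R + 2)^-1)) => //.
  - move=> e _.
    have H := bd e.+1 e (ltnSn e).
    have /andP[h0 h1] := HA (history_arr s0 e) (history_dep s0 d0 e).
    have hd : dis_bd (x e) <= x e.
      by rewrite /dis_bd ge_min subr0 ger0_norm ?lexx.
    rewrite mulrSr -addrA in H.
    have -> : (e%:R + 2 : R) = e%:R + (1 + 1) by [].
    nra.
  - move=> e _.
    have H := bd e.+1 e (ltnSn e).
    have /andP[h0 h1] := HA (history_arr s0 e) (history_dep s0 d0 e).
    have hd : dis_bd (x e) <= 1 - x e.
      by rewrite /dis_bd ge_min; apply/orP; right; rewrite distrC ger0_norm ?subr_ge0.
    rewrite mulrSr -addrA in H.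
    have -> : (e%:R + 2 : R) = e%:R + (1 + 1) by [].
    nra.
  - move=> u v hu hv huv.
    have hne : u <> v by apply/eqP.
    have H := pr (maxn u v).+1 u v (leq_trans (leq_maxl u v) (ltnSn _))
                 (leq_trans (leq_maxr u v) (ltnSn _)) hne.
    rewrite -mulrBr normrM (gtr0_norm sig0).
    rewrite mulrSr -addrA in H.
    case: (leqP u v) => huv'.
      rewrite (maxn_idPr huv') in H.
      by apply: le_trans H; rewrite ge_min lexx orbT.
    rewrite (maxn_idPl (ltnW huv')) in H.
    by apply: le_trans H; rewrite ge_min lexx.
have hpos : 0 < 2 * k%:R + 3 :> R by lra.
have : 2 / (2 * k%:R + 3) < delta.
  by rewrite ltr_pdivrMr //; nra.
rewrite /delta; lra.
Qed.
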